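(* Let $n\ge3$. Let $\mathcal M=(G,In,Out,Leak)$ be a linear compartmental model with $n-1$ compartments such that $In=Out=\{1\}$ and $Leak=\emptyset$. Let $H$ be the graph obtained from $G$ by adding a leaf edge at compartment $1$ (new compartment $n$, edges $1\to n$ with parameter $a_{n1}$ and $n\to1$ with parameter $a_{1n}$), and let $\mathcal M'=(H,In',Out',Leak')$ be a linear compartmental model with $Leak'=\emptyset$. Let $A$ and $A^*$ denote the compartmental matrices of $\mathcal M$ and $\mathcal M'$. Then: (1) $\det(\lambda I-A^* )=\lambda\det(\lambda I-A)+a_{1n}\det(\lambda I-A)+a_{n1}\lambda\det\big((\lambda I-A)^{1,1}\big)$; (2) $\det\big((\lambda I-A^* )^{1,n}\big)=(-1)^{n-1}a_{n1}\det\big((\lambda I-A)^{1,1}\big)$; (3) $\det\big((\lambda I-A^* )^{n,1}\big)=(-1)^{n-1}a_{1n}\det\big((\lambda I-A)^{1,1}\big)$.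
   Context: A linear compartmental model $\mathcal M=(G,In,Out,Leak)$ consists of a finite directed graph $G=(V_G,E_G)$ without multi-edges, compartments $V_G=\{1,\dots,m\}$, and subsets $In,Out,Leak\subseteq V_G$; edge $j\to i$ carries parameter $a_{ij}$ and each $i\in Leak$ carries $a_{0i}$. The compartmental matrix $A$ has $A_{ii}=-\sum_{k:\,i\to k\in E_G}a_{ki}$ (minus $a_{0i}$ if $i\in Leak$), $A_{ij}=a_{ij}$ if $j\to i\in E_G$, $0$ otherwise. $B^{i,j}$ denotes $B$ with row $i$ and column $j$ removed; $\lambda$ is an indeterminate. Adding a leaf edge at $i$ to a graph with vertex set $\{1,\dots,n-1\}$ gives the graph with vertex set $\{1,\dots,n\}$ and edge set $E_G\cup\{i\to n,n\to i\}$. *)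

(* Defs.v *)
From HB Require Import structures.
From mathcomp Require Import all_boot all_order all_algebra.
Set Implicit Arguments. Unset Strict Implicit. Unset Printing Implicit Defensive.
Import GRing.Theory.
Local Open Scope ring_scope.

(* Compartments {1,...,k} are represented by 'I_k (compartment i+1 <-> index i).
   A directed graph is a relation G : rel 'I_k, with  G x y  meaning the edge x -> y.
   Edge parameters: a i j is the parameter a_{ij} of the edge j -> i;
   leak parameters: a0 i is a_{0i}. *)

Definition comp_mx (R : comRingType) (k : nat) (G : rel 'I_k) (Leak : pred 'I_k)
    (a : 'I_k -> 'I_k -> R) (a0 : 'I_k -> R) : 'M[R]_k :=
  \matrix_(i, j)
    if i == j then - (\sum_(l | G i l) a l i) - (if Leak i then a0 i else 0)
    else if G j i then a i j else 0.

(* Adding a leaf edge at i to a graph on 'I_k: new vertex ord_max (= compartment k+1),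
   old vertex x is embedded as lift ord_max x (same numerical value). *)
Definition add_leaf (k : nat) (G : rel 'I_k) (i : 'I_k) : rel 'I_k.+1 :=
  fun x y =>
    match unlift ord_max x, unlift ord_max y with
    | Some x', Some y' => G x' y'
    | Some x', None => x' == i
    | None, Some y' => y' == i
    | None, None => false
    end.

(* Main.v *)
Require Import Defs.
From HB Require Import structures.
From mathcomp Require Import all_boot all_order all_algebra ring.
Import GRing.Theory.
Local Open Scope ring_scope.

Section S.
Variables (R : comRingType) (m : nat) (G : rel 'I_m.+2) (a : 'I_m.+3 -> 'I_m.+3 -> R) (a0 : 'I_m.+3 -> R).
Let H := add_leaf G ord0.
Let A := comp_mx G pred0 (fun i j => a (lift ord_max i) (lift ord_max j))
                   (fun i => a0 (lift ord_max i)).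
Let As := comp_mx H pred0 a a0.

Lemma Hll i j : H (lift ord_max i) (lift ord_max j) = G i j.
Proof. by rewrite /H /add_leaf !liftK. Qed.
Lemma Hlm i : H (lift ord_max i) ord_max = (i == ord0).
Proof. by rewrite /H /add_leaf liftK unlift_none. Qed.
Lemma Hml i : H ord_max (lift ord_max i) = (i == ord0).
Proof. by rewrite /H /add_leaf liftK unlift_none. Qed.
Lemma Hmm : H ord_max ord_max = false.
Proof. by rewrite /H /add_leaf unlift_none. Qed.

Lemma l0 : lift ord_max (ord0 : 'I_m.+2) = ord0.
Proof. by apply/val_inj. Qed.

Lemma sumH (f : 'I_m.+3 -> R) x :
  \sum_(l | H x l) f l = (if H x ord_max then f ord_max else 0)
     + \sum_(l < m.+2) (if H x (lift ord_max l) then f (lift ord_max l) else 0).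
Proof. by rewrite big_mkcond (bigD1_ord ord_max) //=. Qed.

Lemma Q1 (i j : 'I_m.+2) : char_poly_mx As (lift ord_max i) (lift ord_max j) =
  char_poly_mx A i j + ((i == ord0) && (j == ord0))%:R * (a ord_max ord0)%:P.
Proof.
rewrite !mxE (inj_eq (@lift_inj _ _)).
case: eqVneq => [<-|nij] /=.
  rewrite andbb sumH Hlm !subr0.
  rewrite [in RHS]big_mkcond /=.
  under [in LHS]eq_bigr do rewrite Hll.
  case: eqVneq => [->|_]; rewrite ?l0 ?add0r ?mul0r ?addr0 //.
  rewrite mul1r !polyCN polyCD; ring.
rewrite Hll; have -> : (i == ord0) && (j == ord0) = false.
  by apply/negbTE; apply: contra nij => /andP[/eqP -> /eqP ->].
by rewrite mul0r addr0.
Qed.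

Lemma Q2 (i : 'I_m.+2) : char_poly_mx As (lift ord_max i) ord_max =
  - ((i == ord0)%:R * (a ord0 ord_max)%:P).
Proof.
rewrite !mxE lift_eqF /= Hml mulr0n add0r.
by case: eqVneq => [->|_]; rewrite ?l0 ?mul1r ?mul0r ?oppr0 ?subr0 ?sub0r.
Qed.

Lemma Q3 (j : 'I_m.+2) : char_poly_mx As ord_max (lift ord_max j) =
  - ((j == ord0)%:R * (a ord_max ord0)%:P).
Proof.
rewrite !mxE eq_liftF /= Hlm mulr0n add0r.
by case: eqVneq => [->|_]; rewrite ?l0 ?mul1r ?mul0r ?oppr0 ?subr0 ?sub0r.
Qed.

Lemma Q4 : char_poly_mx As ord_max ord_max = 'X + (a ord0 ord_max)%:P.
Proof.
rewrite !mxE eqxx /= sumH Hmm add0r subr0.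
under eq_bigr do rewrite Hml.
rewrite -big_mkcond big_pred1_eq l0 polyCN opprK.
by rewrite mulr1n.
Qed.

Lemma lift_comm n (i : 'I_n) :
  lift ord0 (lift ord_max i) = lift ord_max (lift ord0 i) :> 'I_n.+2.
Proof. apply/val_inj; rewrite /= /bump. have hi : (n <= i)%N = false by rewrite leqNgt ltn_ord. by rewrite hi /= add1n ltnS hi. Qed.

Lemma l0max : lift ord0 (ord_max : 'I_m.+2) = ord_max :> 'I_m.+3.
Proof. by apply/val_inj. Qed.

Lemma minorP : row' ord_max (col' ord0 (row' ord0 (col' ord_max (char_poly_mx As))))
   = row' ord0 (col' ord0 (char_poly_mx A)).
Proof.
set Q := char_poly_mx As; set P := char_poly_mx A.
have eQ : Q = char_poly_mx As by []. have eP : P = char_poly_mx A by [].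
clearbody Q P.
apply/matrixP => i j; rewrite !mxE lift_comm eQ Q1.
by rewrite eP lift_eqF /= mul0r addr0.
Qed.

Lemma part2 : \det (row' ord0 (col' ord_max (char_poly_mx As))) =
  (-1) ^+ m.+2 * (a ord_max ord0)%:P * \det (row' ord0 (col' ord0 (char_poly_mx A))).
Proof.
rewrite (expand_det_row _ ord_max) (bigD1 ord0) //= big1 ?addr0; last first.
  move=> j nj; set Q := char_poly_mx As.
  have eQ : Q = char_poly_mx As by []. clearbody Q.
  by rewrite !mxE l0max eQ Q3 (negPf nj) mul0r oppr0 mul0r.
rewrite /cofactor minorP; set Q := char_poly_mx As.
have eQ : Q = char_poly_mx As by []. clearbody Q.
rewrite !mxE l0max eQ Q3 eqxx mul1r addn0 [in RHS]exprS.
by ring.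
Qed.

Lemma minorP3 : row' ord0 (col' ord_max (row' ord_max (col' ord0 (char_poly_mx As))))
   = row' ord0 (col' ord0 (char_poly_mx A)).
Proof.
set Q := char_poly_mx As; set P := char_poly_mx A.
have eQ : Q = char_poly_mx As by []. have eP : P = char_poly_mx A by [].
clearbody Q P.
apply/matrixP => i j; rewrite !mxE lift_comm eQ Q1.
by rewrite eP lift_eqF /= mul0r addr0.
Qed.

Lemma part3 : \det (row' ord_max (col' ord0 (char_poly_mx As))) =
  (-1) ^+ m.+2 * (a ord0 ord_max)%:P * \det (row' ord0 (col' ord0 (char_poly_mx A))).
Proof.
rewrite (expand_det_col _ ord_max) (bigD1 ord0) //= big1 ?addr0; last first.
  move=> j nj; set Q := char_poly_mx As.
  have eQ : Q = char_poly_mx As by []. clearbody Q.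
  by rewrite !mxE l0max eQ Q2 (negPf nj) mul0r oppr0 mul0r.
rewrite /cofactor minorP3; set Q := char_poly_mx As.
have eQ : Q = char_poly_mx As by []. clearbody Q.
rewrite !mxE l0max eQ Q2 eqxx mul1r add0n [in RHS]exprS.
by ring.
Qed.

Lemma sign_even (T : pzRingType) k : (-1) ^+ (k + k) = 1 :> T.
Proof. by rewrite -signr_odd oddD addbb expr0. Qed.

Lemma minorB : row' ord_max (col' ord_max (char_poly_mx As)) =
  char_poly_mx A + \matrix_(i, j) (((i == ord0) && (j == ord0))%:R * (a ord_max ord0)%:P).
Proof.
set Q := char_poly_mx As; set P := char_poly_mx A.
have eQ : Q = char_poly_mx As by []. have eP : P = char_poly_mx A by [].
clearbody Q P.
by apply/matrixP => i j; rewrite !mxE eQ Q1 eP.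
Qed.

Lemma detB : \det (row' ord_max (col' ord_max (char_poly_mx As))) =
  \det (char_poly_mx A) + (a ord_max ord0)%:P * \det (row' ord0 (col' ord0 (char_poly_mx A))).
Proof.
rewrite minorB; set P := char_poly_mx A.
have eP : P = char_poly_mx A by []. clearbody P.
rewrite (expand_det_row _ ord0) [X in _ = X + _](expand_det_row _ ord0).
have hc : forall j, cofactor (P + \matrix_(i, j) (((i == ord0) && (j == ord0))%:R * (a ord_max ord0)%:P)) ord0 j = cofactor P ord0 j.
  move=> j; rewrite /cofactor; congr (_ * \det _).
  by apply/matrixP => i k; rewrite !mxE lift_eqF /= mul0r addr0.
under eq_bigr do rewrite hc !mxE eqxx /= mulrDl.
rewrite big_split /=; congr (_ + _).
rewrite (bigD1 ord0) //= big1 ?addr0; last first.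
  by move=> j nj; rewrite (negPf nj) !mul0r.
by rewrite mul1r /cofactor add0n expr0 mul1r.
Qed.

Lemma part1 : \det (char_poly_mx As) =
        'X * \det (char_poly_mx A) + (a ord0 ord_max)%:P * \det (char_poly_mx A)
        + (a ord_max ord0)%:P * 'X * \det (row' ord0 (col' ord0 (char_poly_mx A))).
Proof.
rewrite (expand_det_row _ ord_max) (bigD1_ord ord_max) //= (bigD1 ord0) //= big1 ?addr0; last first.
  by move=> j nj; rewrite Q3 (negPf nj) mul0r oppr0 mul0r.
rewrite Q4 Q3 eqxx mul1r {1}/cofactor sign_even mul1r detB.
rewrite /cofactor l0 part3 addn0.
have e : forall x y : {poly R}, (-1) ^+ (@ord_max m.+2) * ((-1) ^+ m.+2 * x * y) = x * y.
  move=> x y; have st : (-1) ^+ (@ord_max m.+2) * (-1) ^+ m.+2 = 1 :> {poly R}.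
    by rewrite -exprD sign_even.
  move: st; set t := (-1) ^+ (@ord_max m.+2) => st.
  by rewrite mulrA (mulrA t t) st mul1r.
rewrite e.
by ring.
Qed.
End S.

Theorem lemma4p13 (R : comRingType) (m : nat)
  (G : rel 'I_m.+2) (In Out : {set 'I_m.+2})
  (hIn : In = [set ord0]) (hOut : Out = [set ord0])
  (In' Out' : {set 'I_m.+3})
  (a : 'I_m.+3 -> 'I_m.+3 -> R) (a0 : 'I_m.+3 -> R) :
  let H := add_leaf G ord0 in
  let A := comp_mx G pred0 (fun i j => a (lift ord_max i) (lift ord_max j))
                   (fun i => a0 (lift ord_max i)) in
  let As := comp_mx H pred0 a a0 in
  [/\ \det (char_poly_mx As) =
        'X * \det (char_poly_mx A) + (a ord0 ord_max)%:P * \det (char_poly_mx A)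
        + (a ord_max ord0)%:P * 'X * \det (row' ord0 (col' ord0 (char_poly_mx A))),
      \det (row' ord0 (col' ord_max (char_poly_mx As))) =
        (-1) ^+ (m.+3 - 1) * (a ord_max ord0)%:P
          * \det (row' ord0 (col' ord0 (char_poly_mx A)))
    & \det (row' ord_max (col' ord0 (char_poly_mx As))) =
        (-1) ^+ (m.+3 - 1) * (a ord0 ord_max)%:P
          * \det (row' ord0 (col' ord0 (char_poly_mx A)))].

Proof.
move=> H A As.
have -> : (m.+3 - 1)%N = m.+2 by [].
split.
- exact: part1.
- exact: part2.
- exact: part3.
Qed.
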